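(* Let $(X,<)$ be a Banach lattice with lattice norm $\|\cdot\|$, and let $\mathcal{R}$ be the almost summability on $\mathcal{D}_{\mathcal{R}}\subset X^{\mathbb{N}}$. Then $\mathcal{R}$ preserves order-inequalities.
   Context: A sequence $(x_k)$ in $X$ is almost convergent to $L\in X$ if $\frac{1}{m+1}\sum_{i=0}^m x_{n+i}\to L$ in norm as $m\to\infty$, uniformly in $n$; the almost summability $\mathcal{R}$ has as domain $\mathcal{D}_{\mathcal{R}}$ the almost convergent sequences and assigns their almost limit; write $x_n\overset{\mathcal{R}}{\longrightarrow}L$. For $u\in X$, $|u|=u\vee(-u)$. $\mathcal{R}$ preserves order-inequalities if: whenever $(w_n),(x_n),(y_n),(z_n)\in\mathcal{D}_{\mathcal{R}}$, $w,x,y,z\in X$ and $C>0$ satisfy, for all $n$, $-C[(x_n-x)+(y_n-y)+(z_n-z)]<w_n-w<C[(x_n-x)+(y_n-y)+(z_n-z)]$ in the lattice order, and $x_n\overset{\mathcal{R}}{\longrightarrow}x$, $y_n\overset{\mathcal{R}}{\longrightarrow}y$, $z_n\overset{\mathcal{R}}{\longrightarrow}z$, then $w_n\overset{\mathcal{R}}{\longrightarrow}w$. *)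

(* Defs.v *)
From HB Require Import structures.
From mathcomp Require Import all_boot all_order all_algebra.
From mathcomp Require Import all_classical all_reals all_analysis.
Set Implicit Arguments. Unset Strict Implicit. Unset Printing Implicit Defensive.
Import Order.TTheory GRing.Theory Num.Theory.
Import numFieldNormedType.Exports.
Local Open Scope ring_scope.

Record banach_lattice (R : realType) (V : completeNormedModType R) := BanachLattice {
  ble : V -> V -> Prop;
  bjoin : V -> V -> V;
  bmeet : V -> V -> V;
  ble_refl : forall x, ble x x;
  ble_trans : forall x y z, ble x y -> ble y z -> ble x z;
  ble_anti : forall x y, ble x y -> ble y x -> x = y;
  bjoin_ubl : forall x y, ble x (bjoin x y);
  bjoin_ubr : forall x y, ble y (bjoin x y);
  bjoin_least : forall x y z, ble x z -> ble y z -> ble (bjoin x y) z;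
  bmeet_lbl : forall x y, ble (bmeet x y) x;
  bmeet_lbr : forall x y, ble (bmeet x y) y;
  bmeet_greatest : forall x y z, ble z x -> ble z y -> ble z (bmeet x y);
  ble_add : forall x y z, ble x y -> ble (x + z) (y + z);
  ble_scale : forall (a : R) x y, 0 <= a -> ble x y -> ble (a *: x) (a *: y);
  lattice_norm : forall x y, ble (bjoin x (- x)) (bjoin y (- y)) -> `|x| <= `|y|
}.

Definition babs (R : realType) (V : completeNormedModType R)
  (B : banach_lattice V) (u : V) : V := bjoin B u (- u).

Definition almost_cvg (R : realType) (V : completeNormedModType R)
  (x : nat -> V) (L : V) : Prop :=
  forall eps : R, 0 < eps -> exists M : nat, forall m n : nat, (M <= m)%N ->
    `| (m.+1%:R)^-1 *: (\sum_(0 <= i < m.+1) x (n + i)%N) - L | < eps.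

Definition almost_convergent (R : realType) (V : completeNormedModType R)
  (x : nat -> V) : Prop := exists L, almost_cvg x L.

(* Main.v *)
Require Import Defs.
From HB Require Import structures.
From mathcomp Require Import all_boot all_order all_algebra.
From mathcomp Require Import all_classical all_reals all_analysis.
From mathcomp Require Import ring lra.
Import Order.TTheory GRing.Theory Num.Theory.
Import numFieldNormedType.Exports.
Local Open Scope ring_scope.
Set Implicit Arguments. Unset Strict Implicit.

Section S.
Variables (R : realType) (V : completeNormedModType R) (B : banach_lattice V).

Lemma bleD a b c d : ble B a b -> ble B c d -> ble B (a + c) (b + d).
Proof.
move=> h1 h2; apply: (ble_trans (ble_add c h1)).
rewrite (addrC b c) (addrC b d); exact: ble_add.
Qed.

Lemma bleN a b : ble B a b -> ble B (- b) (- a).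
Proof.
move=> h; have := ble_add (- a - b) h.
by rewrite addrA subrr add0r addrCA subrr addr0.
Qed.

Lemma ble_sum (a b : nat -> V) k : (forall i, ble B (a i) (b i)) ->
  ble B (\sum_(0 <= i < k) a i) (\sum_(0 <= i < k) b i).
Proof.
move=> h; elim: k => [|k IH]; first by rewrite !big_geq //; exact: ble_refl.
by rewrite !big_nat_recr //=; apply: bleD.
Qed.

Definition avg (f : nat -> V) m n := (m.+1%:R : R)^-1 *: \sum_(0 <= i < m.+1) f (n + i)%N.

Lemma avgD f g m n : avg (fun k => f k + g k) m n = avg f m n + avg g m n.
Proof. by rewrite /avg big_split scalerDr. Qed.

Lemma avgZ (a : R) f m n : avg (fun k => a *: f k) m n = a *: avg f m n.
Proof.
by rewrite /avg -scaler_sumr !scalerA mulrC. Qed.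

Lemma avgC (c : V) m n : avg (fun _ => c) m n = c.
Proof.
rewrite /avg sumr_const_nat subn0 -(@scaler_nat R V) scalerA mulVf ?scale1r //.
Qed.

Lemma avgB f c m n : avg (fun k => f k - c) m n = avg f m n - c.
Proof. by rewrite (avgD f (fun _ => - c)) avgC. Qed.

End S.

Theorem theorem3p6 (R : realType) (V : completeNormedModType R)
  (B : banach_lattice V) :
  forall (w x y z : nat -> V) (w0 x0 y0 z0 : V) (C : R),
    almost_convergent w -> almost_convergent x ->
    almost_convergent y -> almost_convergent z ->
    0 < C ->
    (forall n : nat,
       ble B (- (C *: ((x n - x0) + (y n - y0) + (z n - z0)))) (w n - w0) /\
       ble B (w n - w0) (C *: ((x n - x0) + (y n - y0) + (z n - z0)))) ->
    almost_cvg x x0 -> almost_cvg y y0 -> almost_cvg z z0 ->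
    almost_cvg w w0.
Proof.
move=> w x y z w0 x0 y0 z0 C _ _ _ _ C0 hle hx hy hz eps e0.
have e3 : 0 < eps / (3 * C) by rewrite divr_gt0 // mulr_gt0.
have [Mx HMx] := hx _ e3; have [My HMy] := hy _ e3; have [Mz HMz] := hz _ e3.
exists (maxn Mx (maxn My Mz)) => m n hm.
have hmx : (Mx <= m)%N by move: hm; rewrite geq_max => /andP[].
have hmy : (My <= m)%N by move: hm; rewrite !geq_max => /and3P[].
have hmz : (Mz <= m)%N by move: hm; rewrite !geq_max => /and3P[].
set s := fun k => C *: ((x k - x0) + (y k - y0) + (z k - z0)).
have hinv : (0 : R) <= (m.+1%:R)^-1 by rewrite invr_ge0.
have H1 : ble B (avg (fun k => w k - w0) m n) (avg s m n).
  apply: (ble_scale hinv); apply: ble_sum => i; exact: (hle _).2.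
have H2 : ble B (avg (fun k => - s k) m n) (avg (fun k => w k - w0) m n).
  apply: (ble_scale hinv); apply: ble_sum => i; exact: (hle _).1.
have avgN : avg (fun k => - s k) m n = - avg s m n.
  rewrite -scaleN1r -avgZ; congr avg; apply: funext => k; by rewrite scaleN1r.
rewrite avgN in H2.
have Hn : `|avg (fun k => w k - w0) m n| <= `|avg s m n|.
  apply: lattice_norm.
  apply: bjoin_least.
    apply: (ble_trans H1); exact: bjoin_ubl.
  apply: ble_trans (bjoin_ubl _ _ _).
  by have := bleN H2; rewrite opprK.
rewrite avgB in Hn.
have E : avg s m n = C *: ((avg x m n - x0) + (avg y m n - y0) + (avg z m n - z0)).
  rewrite /s avgZ; congr (C *: _).
  rewrite (avgD (fun k => x k - x0 + (y k - y0)) (fun k => z k - z0)).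
  by rewrite (avgD (fun k => x k - x0) (fun k => y k - y0)) (avgB x) (avgB y) (avgB z).
rewrite E in Hn.
apply: (le_lt_trans Hn); rewrite normrZ gtr0_norm //.
have Hx := HMx m n hmx; have Hy := HMy m n hmy; have Hz := HMz m n hmz.
rewrite /avg in Hx Hy Hz *.
apply: (@lt_le_trans _ _ (C * (eps / (3 * C) + eps / (3 * C) + eps / (3 * C)))); last first.
  have -> : C * (eps / (3 * C) + eps / (3 * C) + eps / (3 * C)) = eps.
    by field; rewrite gt_eqF.
  by [].
rewrite ltr_pM2l //.
apply: (le_lt_trans (ler_normD _ _)); apply: ltr_leD; last exact: ltW.
apply: (le_lt_trans (ler_normD _ _)); apply: ltr_leD => //; exact: ltW.
Qed.
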